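(* Let $\Omega=[-1,1]$, let $\Pi_3(\mathbb{R}^1)$ be the space of real polynomials in one variable of degree at most $3$, and let $T:\mathbb{R}\to\mathbb{R}^3$, $T(x)=(x,x^2,x^3)$. Let $P:C[-1,1]\to\Pi_3(\mathbb{R}^1)$ be the interpolation projector with the regular nodes $-1,-\frac13,\frac13,1$, and let $S\subset\mathbb{R}^3$ be the tetrahedron with vertices $T(-1),T(-\frac13),T(\frac13),T(1)$. Then $$\xi(T(\Omega);S)=\frac{4}{2}\left(\|P\|_\Omega-1\right)+1=2\|P\|_\Omega-1.$$
   Context: For a nondegenerate simplex $S\subset\mathbb{R}^m$ and $\sigma>0$, $\sigma S$ denotes the image of $S$ under the homothety with center at the center of gravity of $S$ and ratio $\sigma$. For a closed bounded set $K\subset\mathbb{R}^m$, $\xi(K;S):=\min\{\sigma\ge 1: K\subset\sigma S\}$. The interpolation projector $P$ with distinct nodes $x^{(1)},\dots,x^{(4)}\in\Omega$ onto $\Pi_3(\mathbb{R}^1)$ is defined by $Pf\in\Pi_3(\mathbb{R}^1)$, $Pf(x^{(j)})=f(x^{(j)})$ for all $j$; $\|P\|_\Omega$ is its operator norm as a map $C(\Omega)\to C(\Omega)$ with the uniform norm. *)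

(* Defs.v *)
From HB Require Import structures.
From mathcomp Require Import all_boot all_order all_algebra.
From mathcomp Require Import all_classical all_reals all_analysis.
Set Implicit Arguments. Unset Strict Implicit. Unset Printing Implicit Defensive.
Import Order.TTheory GRing.Theory Num.Theory numFieldNormedType.Exports.
Local Open Scope classical_set_scope.
Local Open Scope ring_scope.

Section Defs.
Variable R : realType.

Definition simplex (m : nat) (v : 'I_m.+1 -> 'rV[R]_m) : set 'rV[R]_m :=
  [set y | exists lam : 'I_m.+1 -> R,
      (forall i, 0 <= lam i) /\ \sum_i lam i = 1 /\ y = \sum_i lam i *: v i].

Definition simplex_center (m : nat) (v : 'I_m.+1 -> 'rV[R]_m) : 'rV[R]_m :=
  (m.+1%:R)^-1 *: \sum_i v i.

Definition scaled_simplex (m : nat) (sigma : R) (v : 'I_m.+1 -> 'rV[R]_m)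
  : set 'rV[R]_m :=
  [set simplex_center v + sigma *: (y - simplex_center v) | y in simplex v].

Definition xi (m : nat) (K : set 'rV[R]_m) (v : 'I_m.+1 -> 'rV[R]_m) : R :=
  inf [set sigma : R | 1 <= sigma /\ K `<=` scaled_simplex sigma v].

Definition interp_proj_norm (n : nat) (Omega : set R) (x : 'I_n.+1 -> R) : R :=
  sup [set r : R | exists (f : R -> R) (p : {poly R}) (t : R),
            {within Omega, continuous f} /\
            (forall s, Omega s -> `|f s| <= 1) /\
            (size p <= n.+1)%N /\
            (forall j, p.[x j] = f (x j)) /\
            Omega t /\ r = `|p.[t]|].

Definition Tcurve (x : R) : 'rV[R]_3 := \row_(i < 3) x ^+ i.+1.

Definition reg_nodes (j : 'I_4) : R := (j%:R * 2) / 3 - 1.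

End Defs.

(* Main.v *)
Require Import Defs.
From HB Require Import structures.
From mathcomp Require Import all_boot all_order all_algebra.
From mathcomp Require Import all_classical all_reals all_analysis.
From mathcomp Require Import ring lra.
Import Order.TTheory GRing.Theory Num.Theory numFieldNormedType.Exports.
Local Open Scope classical_set_scope.
Local Open Scope ring_scope.

Section S.
Variable R : realType.
Definition l0 (t:R) := -(9/16)*((t+1/3)*(t-1/3)*(t-1)).
Definition l1 (t:R) := (27/16)*((t+1)*(t-1/3)*(t-1)).
Definition l2 (t:R) := -(27/16)*((t+1)*(t+1/3)*(t-1)).
Definition l3 (t:R) := (9/16)*((t+1)*(t+1/3)*(t-1/3)).
Definition ts : R := (1 + 2 * Num.sqrt 7) / 9.
Definition cc : R := - l1 ts.

Lemma ts_eq : 9 * ts^+2 - 2 * ts - 3 = 0.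
Proof.
have h : Num.sqrt (7:R) ^+ 2 = 7 by rewrite sqr_sqrtr // ler0n.
have -> : 9 * ts^+2 - 2 * ts - 3 = 4/9 * (Num.sqrt 7 ^+ 2 - 7) by rewrite /ts; field.
by rewrite h subrr mulr0.
Qed.

Lemma ts_bnd : 2/3 < ts <= 1.
Proof.
have h : Num.sqrt (7:R) ^+ 2 = 7 by rewrite sqr_sqrtr // ler0n.
have h0 : 0 <= Num.sqrt (7:R) by apply: sqrtr_ge0.
rewrite /ts; apply/andP; split; nra.
Qed.

Lemma l1_min t : -1 <= t -> l1 ts <= l1 t.
Proof.
move=> ht.
have hE := ts_eq. have b := ts_bnd. move/andP: b => [b1 b2].
have key : l1 t - l1 ts = (27/16) * ((t-ts)^+2 * (t+2*ts-1/3) + (9 * ts^+2 - 2 * ts - 3)*(t-ts)/3).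
  by rewrite /l1; field.
rewrite hE mul0r mul0r addr0 in key.
rewrite -subr_ge0 key; apply: mulr_ge0; first lra.
apply: mulr_ge0; [exact: sqr_ge0 | lra].
Qed.

Lemma cc_ge : 3/10 <= cc.
Proof. have := l1_min (7/10). rewrite /cc /l1 => h. have := h ltac:(lra). lra. Qed.

Lemma l2E t : l2 t = l1 (-t).
Proof. by rewrite /l2 /l1; field. Qed.

Lemma l0_ge t : -1 <= t <= 1 -> -(3/10) <= l0 t.
Proof. move=> /andP[a b]. rewrite /l0. nra. Qed.
Lemma l3_ge t : -1 <= t <= 1 -> -(3/10) <= l3 t.
Proof. move=> /andP[a b]. rewrite /l3. nra. Qed.
Lemma lsum t : l0 t + l1 t + l2 t + l3 t = 1.
Proof. by rewrite /l0 /l1 /l2 /l3; field. Qed.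

Lemma comb (a0 a1 a2 a3 f0 f1 f2 f3 : R) :
  `|f0| <= 1 -> `|f1| <= 1 -> `|f2| <= 1 -> `|f3| <= 1 ->
  `|f0 * a0 + f1 * a1 + f2 * a2 + f3 * a3| <= `|a0| + `|a1| + `|a2| + `|a3|.
Proof.
move=> h0 h1 h2 h3.
have H (f a : R) : `|f| <= 1 -> `|f * a| <= `|a|.
  by move=> hf; rewrite normrM; apply: ler_piMl.
apply: (le_trans (ler_normD _ _)); apply: lerD; last exact: H.
apply: (le_trans (ler_normD _ _)); apply: lerD; last exact: H.
apply: (le_trans (ler_normD _ _)); apply: lerD; exact: H.
Qed.

Lemma cc_pos : 0 <= cc.
Proof. have := cc_ge; lra. Qed.

Lemma pos3 (x k a b c : R) : x = k * (a * b * c) -> 0 <= k -> 0 <= a -> 0 <= b -> 0 <= c -> 0 <= x.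
Proof. move=> -> *; do ! apply: mulr_ge0 => //. Qed.

Lemma lebesgue t : -1 <= t <= 1 ->
  `|l0 t| + `|l1 t| + `|l2 t| + `|l3 t| <= 1 + 2 * cc.
Proof.
move=> /andP[ta tb].
have s := lsum t. have c1 := l1_min t ta. have c2 := l1_min (-t) ltac:(lra).
rewrite -l2E in c2. have cg := cc_ge.
have [t1|t1] := lerP (1/3) t.
  have a0 : 0 <= l0 t by apply: (@pos3 _ (9/16) (t+1/3) (t-1/3) (1-t)); [by rewrite /l0; field | lra | lra | lra | lra].
  have a1 : l1 t <= 0 by rewrite -oppr_ge0; apply: (@pos3 _ (27/16) (t+1) (t-1/3) (1-t)); [by rewrite /l1; field | lra | lra | lra | lra].
  have a2 : 0 <= l2 t by apply: (@pos3 _ (27/16) (t+1) (t+1/3) (1-t)); [by rewrite /l2; field | lra | lra | lra | lra].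
  have a3 : 0 <= l3 t by apply: (@pos3 _ (9/16) (t+1) (t+1/3) (t-1/3)); [by rewrite /l3; field | lra | lra | lra | lra].
  rewrite (ger0_norm a0) (ler0_norm a1) (ger0_norm a2) (ger0_norm a3).
  rewrite /cc; lra.
have [t2|t2] := lerP (-(1/3)) t.
  have a0 : l0 t <= 0 by rewrite -oppr_ge0; apply: (@pos3 _ (9/16) (t+1/3) (1/3-t) (1-t)); [by rewrite /l0; field | lra | lra | lra | lra].
  have a1 : 0 <= l1 t by apply: (@pos3 _ (27/16) (t+1) (1/3-t) (1-t)); [by rewrite /l1; field | lra | lra | lra | lra].
  have a2 : 0 <= l2 t by apply: (@pos3 _ (27/16) (t+1) (t+1/3) (1-t)); [by rewrite /l2; field | lra | lra | lra | lra].
  have a3 : l3 t <= 0 by rewrite -oppr_ge0; apply: (@pos3 _ (9/16) (t+1) (t+1/3) (1/3-t)); [by rewrite /l3; field | lra | lra | lra | lra].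
  have e03 : l0 t + l3 t = 9/8 * (t^+2 - 1/9) by rewrite /l0 /l3; field.
  have : 0 <= t^+2 by apply: sqr_ge0.
  rewrite (ler0_norm a0) (ger0_norm a1) (ger0_norm a2) (ler0_norm a3).
  lra.
have a0 : 0 <= l0 t by apply: (@pos3 _ (9/16) (-(1/3)-t) (1/3-t) (1-t)); [by rewrite /l0; field | lra | lra | lra | lra].
have a1 : 0 <= l1 t by apply: (@pos3 _ (27/16) (t+1) (1/3-t) (1-t)); [by rewrite /l1; field | lra | lra | lra | lra].
have a2 : l2 t <= 0 by rewrite -oppr_ge0; apply: (@pos3 _ (27/16) (t+1) (-(1/3)-t) (1-t)); [by rewrite /l2; field | lra | lra | lra | lra].
have a3 : 0 <= l3 t by apply: (@pos3 _ (9/16) (t+1) (-(1/3)-t) (1/3-t)); [by rewrite /l3; field | lra | lra | lra | lra].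
rewrite (ger0_norm a0) (ger0_norm a1) (ler0_norm a2) (ger0_norm a3).
rewrite /cc; lra.
Qed.

Lemma lge t j : -1 <= t <= 1 -> -cc <= (if j == 0%N then l0 t else if j == 1%N then l1 t else if j == 2%N then l2 t else l3 t).
Proof.
move=> /andP[ta tb]. have cg := cc_ge.
case: ifP => _; first by have := @l0_ge t; rewrite ta tb => /(_ isT); lra.
case: ifP => _; first by have := l1_min t ta; rewrite /cc; lra.
case: ifP => _; first by have := l1_min (-t) ltac:(lra); rewrite -l2E /cc; lra.
by have := @l3_ge t; rewrite ta tb => /(_ isT); lra.
Qed.
Lemma rn k : (k < 4)%N -> @reg_nodes R (inord k) = k%:R * 2 / 3 - 1.
Proof. by move=> hk; rewrite /reg_nodes inordK. Qed.
Lemma rn0 : @reg_nodes R (inord 0) = -1. Proof. rewrite rn //; lra. Qed.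
Lemma rn1 : @reg_nodes R (inord 1) = -(1/3). Proof. rewrite rn //; lra. Qed.
Lemma rn2 : @reg_nodes R (inord 2) = 1/3. Proof. rewrite rn //; lra. Qed.
Lemma rn3 : @reg_nodes R (inord 3) = 1. Proof. rewrite rn //; lra. Qed.

Definition Omg : set R := [set t : R | -1 <= t <= 1].

Lemma norm_ub : ubound [set r : R | exists (f : R -> R) (p : {poly R}) (t : R),
            {within Omg, continuous f} /\
            (forall s, Omg s -> `|f s| <= 1) /\
            (size p <= 4)%N /\
            (forall j, p.[@reg_nodes R j] = f (@reg_nodes R j)) /\
            Omg t /\ r = `|p.[t]|] (1 + 2 * cc).
Proof.
move=> r [f [p [t [_ [hf [hs [hp [ht ->]]]]]]]].
have F0 : `|f (-1)| <= 1 by apply: hf; rewrite /Omg /=; lra.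
have F1 : `|f (-(1/3))| <= 1 by apply: hf; rewrite /Omg /=; lra.
have F2 : `|f (1/3)| <= 1 by apply: hf; rewrite /Omg /=; lra.
have F3 : `|f 1| <= 1 by apply: hf; rewrite /Omg /=; lra.
have := hp (inord 0); have := hp (inord 1); have := hp (inord 2); have := hp (inord 3).
rewrite rn0 rn1 rn2 rn3.
rewrite !(horner_coef_wide _ hs) !big_ord_recr !big_ord0 /= => e3 e2 e1 e0.
have ht2 : -1 <= t <= 1 := ht.
apply: le_trans; last exact: (lebesgue t ht2).
have -> : 0 + p`_0 * t ^+ 0 + p`_1 * t ^+ 1 + p`_2 * t ^+ 2 + p`_3 * t ^+ 3 =
  f (-1) * l0 t + f (-(1/3)) * l1 t + f (1/3) * l2 t + f 1 * l3 t.
  by rewrite -e0 -e1 -e2 -e3 /l0 /l1 /l2 /l3; field.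
exact: comb.
Qed.
Definition fw (s : R) : R := Num.min 1 (('X *+ 3 - 1).[`|('X *+ 3 + 1).[s]|]).
Definition pw : {poly R} := \poly_(i < 4) [:: -(1/8); 27/8; 9/8; -(27/8)]`_i.

Lemma fwE s : fw s = Num.min 1 (3 * `|3 * s + 1| - 1).
Proof. rewrite /fw !hornerE /=. have -> : s + s + s + 1 = 3 * s + 1 by ring. by congr (Num.min _ _); ring. Qed.

Lemma pwE s : pw.[s] = 1 - 2 * l1 s.
Proof. by rewrite /pw horner_poly !big_ord_recr big_ord0 /= /l1; field. Qed.

Lemma fw_cont : continuous fw.
Proof.
move=> x; apply: (@continuous_min R R (fun=> 1) (fun s => (('X *+ 3 - 1).[`|('X *+ 3 + 1).[s]|]) : R) x); first exact: cst_continuous.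
pose Q : {poly R} := 'X *+ 3 + 1.
pose P : {poly R} := 'X *+ 3 - 1.
have h1 := @continuous_comp R R R (horner Q) (Num.norm : R -> R) x (@continuous_horner R Q x) (@norm_continuous R R (Q.[x])).
exact: (@continuous_comp R R R _ (horner P) x h1 (@continuous_horner R P _)).
Qed.
Lemma fw_bnd s : `|fw s| <= 1.
Proof.
rewrite fwE ler_norml; have := normr_ge0 (3 * s + 1) => h.
apply/andP; split; first by rewrite le_min; apply/andP; split; lra.
by rewrite ge_min lexx.
Qed.

Lemma fw_nodes (j : 'I_4) : pw.[@reg_nodes R j] = fw (@reg_nodes R j).
Proof.
rewrite -(inord_val j); case: j => [[|[|[|[|k]]]] hj] //=;
  rewrite ?rn0 ?rn1 ?rn2 ?rn3 pwE fwE /l1.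
- rewrite (_ : 3 * -1 + 1 = -2 :> R); last lra.
  rewrite ler0_norm; last lra. rewrite min_l; last lra. by field.
- rewrite (_ : 3 * -(1/3) + 1 = 0 :> R); last lra.
  rewrite normr0 min_r; last lra. by field.
- rewrite (_ : 3 * (1/3) + 1 = 2 :> R); last lra.
  rewrite ger0_norm; last lra. rewrite min_l; last lra. by field.
- rewrite (_ : 3 * 1 + 1 = 4 :> R); last lra.
  rewrite ger0_norm; last lra. rewrite min_l; last lra. by field.
Qed.

Lemma norm_val : interp_proj_norm Omg (@reg_nodes R) = 1 + 2 * cc.
Proof.
rewrite /interp_proj_norm.
set E := (X in sup X).
have ub : ubound E (1 + 2 * cc) by exact: norm_ub.
have mem : E (1 + 2 * cc).
  exists fw, pw, ts; split; first exact: continuous_subspaceT fw_cont.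
  split; first by move=> s _; exact: fw_bnd.
  split; first exact: size_poly.
  split; first exact: fw_nodes.
  split; first by have := ts_bnd => /andP[a b]; rewrite /Omg /=; apply/andP; split; lra.
  rewrite pwE ger0_norm /cc; first ring.
  by have := cc_pos; rewrite /cc; lra.
apply/eqP; rewrite eq_le; apply/andP; split.
  by apply: ge_sup; [exists (1 + 2 * cc) | ].
by apply: ub_le_sup; [exists (1 + 2 * cc) | ].
Qed.
Lemma sum4 (F : 'I_4 -> R) : \sum_(i < 4) F i = F (inord 0) + F (inord 1) + F (inord 2) + F (inord 3).
Proof.
rewrite !big_ord_recr big_ord0 /= add0r.
by congr (_ + _ + _ + _); congr F; apply/val_inj; rewrite /= inordK.
Qed.

Definition vv (j : 'I_4) : 'rV[R]_3 := Tcurve (@reg_nodes R j).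
Definition Lj (j : 'I_4) (t : R) : R :=
  if nat_of_ord j == 0%N then l0 t else if nat_of_ord j == 1%N then l1 t else if nat_of_ord j == 2%N then l2 t else l3 t.

Lemma entry (y : 'rV[R]_3) (k : 'I_3) : True.
Proof. by []. Qed.

Lemma center_entry (k : 'I_3) : simplex_center vv ord0 k =
  4^-1 * ((-1) ^+ k.+1 + (-(1/3)) ^+ k.+1 + (1/3) ^+ k.+1 + 1 ^+ k.+1).
Proof.
rewrite /simplex_center !mxE summxE sum4 /vv /Tcurve. rewrite !mxE rn0 rn1 rn2 rn3.
done.
Qed.
Lemma comb_entry (lam : 'I_4 -> R) (k : 'I_3) : (\sum_i lam i *: vv i) ord0 k =
  lam (inord 0) * (-1) ^+ k.+1 + lam (inord 1) * (-(1/3)) ^+ k.+1 + lam (inord 2) * (1/3) ^+ k.+1 + lam (inord 3) * 1 ^+ k.+1.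
Proof. by rewrite summxE sum4 /vv /Tcurve !mxE rn0 rn1 rn2 rn3. Qed.

Lemma sumvv_entry (k : 'I_3) : (\sum_i vv i) ord0 k =
  (-1) ^+ k.+1 + (-(1/3)) ^+ k.+1 + (1/3) ^+ k.+1 + 1 ^+ k.+1.
Proof. by rewrite summxE sum4 /vv /Tcurve !mxE rn0 rn1 rn2 rn3. Qed.

Lemma Lj0 t : Lj (inord 0) t = l0 t. Proof. by rewrite /Lj inordK. Qed.
Lemma Lj1 t : Lj (inord 1) t = l1 t. Proof. by rewrite /Lj inordK. Qed.
Lemma Lj2 t : Lj (inord 2) t = l2 t. Proof. by rewrite /Lj inordK. Qed.
Lemma Lj3 t : Lj (inord 3) t = l3 t. Proof. by rewrite /Lj inordK. Qed.

Lemma in_scaled s t : 0 < s -> (forall j, (1 - s)/4 <= Lj j t) -> scaled_simplex s vv (Tcurve t).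
Proof.
move=> s0 hL.
pose lam j := (Lj j t - (1 - s)/4) / s.
exists (\sum_i lam i *: vv i).
  exists lam; split; first by move=> j; apply: divr_ge0; [rewrite subr_ge0; exact: hL | exact: ltW].
  split => //.
  rewrite sum4 /lam Lj0 Lj1 Lj2 Lj3. have e := lsum t. have e2 : l0 t - (1 - s) / 4 + (l1 t - (1 - s) / 4) + (l2 t - (1 - s) / 4) + (l3 t - (1 - s) / 4) = s by move: e; lra.
  have sn : s != 0 by rewrite gt_eqF.
  by rewrite -!mulrDl e2 divff.
have sn : s != 0 by rewrite gt_eqF.
apply/rowP => k. rewrite !mxE comb_entry sumvv_entry /lam Lj0 Lj1 Lj2 Lj3 /l0 /l1 /l2 /l3.
by case: k => [[|[|[|k]]] hk] //=; field.
Qed.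
Lemma lower s : 1 <= s -> scaled_simplex s vv (Tcurve ts) -> 1 + 4 * cc <= s.
Proof.
move=> s1 [z [lam [lam0 [ls ->]]] e].
have E k := congr1 (fun M : 'rV[R]_3 => M ord0 k) e.
have E0 := E (@Ordinal 3 0 isT); have E1 := E (@Ordinal 3 1 isT); have E2 := E (@Ordinal 3 2 isT).
move: E0 E1 E2; rewrite !mxE !comb_entry !sumvv_entry /= => E0 E1 E2.
rewrite sum4 in ls.
have m1 : 0 <= s * lam (inord 1) by apply: mulr_ge0; [lra | exact: lam0].
move: E0 E1 E2 ls m1.
rewrite /cc /l1.
set a0 := lam (inord 0); set a1 := lam (inord 1); set a2 := lam (inord 2); set a3 := lam (inord 3).
set u := ts.
move=> E0 E1 E2 ls m1.
nra.
Qed.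
Lemma xi_val : xi ((@Tcurve R) @` Omg) vv = 1 + 4 * cc.
Proof.
rewrite /xi. set A := (X in inf X).
have cp := cc_pos.
have memA : A (1 + 4 * cc).
  split; first lra.
  move=> y [t ht <-]; apply: in_scaled; first lra.
  move=> j; have := lge t (nat_of_ord j) ht.
  rewrite /Lj; lra.
have lbA : lbound A (1 + 4 * cc).
  move=> s [s1 hs]; apply: (lower s s1); apply: hs; exists ts => //.
  by have := ts_bnd => /andP[a b]; rewrite /Omg /=; apply/andP; split; lra.
apply/eqP; rewrite eq_le; apply/andP; split.
  exact: (ge_inf (ex_intro _ _ lbA) memA).
by apply: lb_le_inf; [exists (1 + 4 * cc) | ].
Qed.
End S.

Theorem mainTheorem2 (R : realType) :
  let Omega : set R := [set t : R | -1 <= t <= 1] in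
  xi ((@Tcurve R) @` Omega) (fun j : 'I_4 => Tcurve (@reg_nodes R j))
  = 2 * interp_proj_norm Omega (@reg_nodes R) - 1.
Proof.
move=> Omega.
have -> : interp_proj_norm Omega (@reg_nodes R) = 1 + 2 * cc R by exact: norm_val.
transitivity (1 + 4 * cc R); first exact: xi_val.
ring.
Qed.
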